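(* Let $(\mathfrak g,D)$ be a difference Lie algebra, $\mathfrak h$ a vector space regarded as an abelian Lie algebra, $K:\mathfrak h\to\mathfrak h$ linear, and $(\mathfrak h,\varrho,K)$ a representation of $(\mathfrak g,D)$. Then isomorphism classes of abelian extensions of $(\mathfrak g,D)$ by $(\mathfrak h,K)$ whose induced representation is $\varrho$ are in bijection with $\mathcal H^2(\mathfrak g,D;\mathfrak h,\varrho,K)$, the bijection sending an extension to the class of the 2-cocycle $(\omega,\chi)$ associated with any section.
   Context: A difference Lie algebra $(\mathfrak g,D)$: a Lie algebra with linear $D$ such that $D[x,y]=[x,D(y)]-[y,D(x)]+[D(x),D(y)]$. A representation $(V,\varrho,K)$ of $(\mathfrak g,D)$: a Lie representation $\varrho:\mathfrak g\to\mathfrak{gl}(V)$ and linear $K:V\to V$ with $K(\varrho(x)u)=\varrho(D(x))u+\varrho(x)K(u)+\varrho(D(x))K(u)$. An abelian extension of $(\mathfrak g,D)$ by $(\mathfrak h,K)$ is a short exact sequence of Lie algebras $0\to\mathfrak h\xrightarrow{i}\hat{\mathfrak g}\xrightarrow{p}\mathfrak g\to0$, $\mathfrak h$ abelian, with $(\hat{\mathfrak g},\hat D)$ a difference Lie algebra and $\hat D\circ i=i\circ K$, $p\circ\hat D=D\circ p$. For a section $s$ ($p\circ s=\mathrm{Id}$), identifying $\mathfrak h$ with $i(\mathfrak h)$: the induced representation is $\varrho(x)u=[s(x),u]_{\hat{\mathfrak g}}$ (independent of $s$), and the associated cocycle is $\omega(x,y)=[s(x),s(y)]_{\hat{\mathfrak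 g}}-s([x,y])$, $\chi(x)=\hat D(s(x))-s(D(x))$. Two abelian extensions $(\hat{\mathfrak g},\hat D)$, $(\tilde{\mathfrak g},\tilde D)$ are isomorphic if there is an isomorphism of difference Lie algebras $\kappa:\tilde{\mathfrak g}\to\hat{\mathfrak g}$ (Lie algebra isomorphism with $\hat D\kappa=\kappa\tilde D$) compatible with the inclusions of $\mathfrak h$ and projections to $\mathfrak g$ (identity on $\mathfrak h$ and on $\mathfrak g$). Cohomology with coefficients in $(V,\varrho,K)$: $\mathfrak C^1=\mathrm{Hom}(\mathfrak g,V)$, $\mathfrak C^n=\mathrm{Hom}(\wedge^n\mathfrak g,V)\oplus\mathrm{Hom}(\wedge^{n-1}\mathfrak g,V)$ ($n\ge2$), $\delta_\varrho(f,\theta)=(d^{CE}_\varrho f,\partial\theta+T(f))$ ($\delta_\varrho f=(d^{CE}_\varrho f,T(f))$ for $n=1$), where $d^{CE}_\varrho$ is the Chevalley–Eilenberg differential, $\partial\theta(x_1,\dots,x_n)=\sum_i(-1)^{i+1}\varrho(x_i)\theta(\dots,\hat x_i,\dots)+\sum_i(-1)^{i+1}\varrho(D(x_i))\theta(\dots,\hat x_i,\dots)+\sum_{i<j}(-1)^{i+j}\theta([x_i,x_j],x_1,\dots,\hat x_i,\dots,\hat x_j,\dots,x_n)$, and $T(f)(x_1,\dots,x_n)=(-1)^n\big(\sum_{k=1}^n\sum_{i_1<\cdots<i_k}f(y_1,\dots,y_n)-K(f(x_1,\dots,x_n))\big)$ with $y_j=D(x_j)$ for $j\in\{i_1,\dots,i_k\}$,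 $y_j=x_j$ otherwise; $\mathcal H^2(\mathfrak g,D;V,\varrho,K)$ is the second cohomology group. *)

(* Defs.v *)
From HB Require Import structures.
From mathcomp Require Import all_boot all_order all_algebra.
Import GRing.Theory.
Local Open Scope ring_scope.

Definition lin {F : fieldType} {U V : lmodType F} (f : U -> V) : Prop :=
  forall (a : F) (x y : U), f (a *: x + y) = a *: f x + f y.

Section Defs.
Variable F : fieldType.

Definition is_lie {L : lmodType F} (br : L -> L -> L) : Prop :=
  (forall x, lin (br x)) /\ (forall y, lin (fun x => br x y)) /\
  (forall x, br x x = 0) /\
  (forall x y z, br x (br y z) + br y (br z x) + br z (br x y) = 0).

Definition diff_lie {L : lmodType F} (br : L -> L -> L) (D : L -> L) : Prop :=
  is_lie br /\ lin D /\
  forall x y, D (br x y) = br x (D y) - br y (D x) + br (D x) (D y).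

Variables (g : lmodType F) (brg : g -> g -> g) (D : g -> g).
Variables (h : lmodType F) (rho : g -> h -> h) (K : h -> h).

Definition is_rep : Prop :=
  (forall x, lin (rho x)) /\
  (forall (a : F) x y u, rho (a *: x + y) u = a *: rho x u + rho y u) /\
  (forall x y u, rho (brg x y) u = rho x (rho y u) - rho y (rho x u)) /\
  lin K /\
  (forall x u, K (rho x u) = rho (D x) u + rho x (K u) + rho (D x) (K u)).

Definition dCE1 (f : g -> h) (x y : g) : h :=
  rho x (f y) - rho y (f x) - f (brg x y).
(* T on 1-cochains: T(f)(x) = (-1)^1 (f(Dx) - K(f x)) *)
Definition T1 (f : g -> h) (x : g) : h := K (f x) - f (D x).
Definition dCE2 (w : g -> g -> h) (x y z : g) : h :=
  rho x (w y z) - rho y (w x z) + rho z (w x y)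
  - w (brg x y) z + w (brg x z) y - w (brg y z) x.
Definition del1 (c : g -> h) (x y : g) : h :=
  rho x (c y) - rho y (c x) + rho (D x) (c y) - rho (D y) (c x) - c (brg x y).
(* T on 2-cochains: T(w)(x,y) = (-1)^2 (w(Dx,y)+w(x,Dy)+w(Dx,Dy) - K(w(x,y))) *)
Definition T2 (w : g -> g -> h) (x y : g) : h :=
  w (D x) y + w x (D y) + w (D x) (D y) - K (w x y).

(* 2-cochains: Hom(wedge^2 g, h) (+) Hom(g, h) *)
Definition cochain2 (w : g -> g -> h) (c : g -> h) : Prop :=
  (forall x, lin (w x)) /\ (forall y, lin (fun x => w x y)) /\
  (forall x, w x x = 0) /\ lin c.

(* 2-cocycles: delta(w, c) = (d^CE w, partial c + T w) = 0 *)
Definition cocycle2 (w : g -> g -> h) (c : g -> h) : Prop :=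
  cochain2 w c /\
  (forall x y z, dCE2 w x y z = 0) /\
  (forall x y, del1 c x y + T2 w x y = 0).

(* equality in H^2: difference is a coboundary delta f = (d^CE f, T f) *)
Definition cohomologous (w1 : g -> g -> h) (c1 : g -> h)
    (w2 : g -> g -> h) (c2 : g -> h) : Prop :=
  exists f : g -> h, lin f /\
    (forall x y, w1 x y - w2 x y = dCE1 f x y) /\
    (forall x, c1 x - c2 x = T1 f x).

Definition is_abext {G : lmodType F} (br : G -> G -> G) (DG : G -> G)
    (i : h -> G) (p : G -> g) : Prop :=
  diff_lie br DG /\ lin i /\ lin p /\
  (forall u v, i u = i v -> u = v) /\
  (forall x, exists a, p a = x) /\
  (forall a, p a = 0 <-> exists u, a = i u) /\
  (forall u v, br (i u) (i v) = 0) /\               (* i Lie morphism, h abelian *)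
  (forall a b, p (br a b) = brg (p a) (p b)) /\
  (forall u, DG (i u) = i (K u)) /\
  (forall a, p (DG a) = D (p a)).

Record abext := AbExt {
  ecar : lmodType F;
  ebr : ecar -> ecar -> ecar;
  eD : ecar -> ecar;
  ei : h -> ecar;
  ep : ecar -> g;
  eax : is_abext ebr eD ei ep
}.

Definition is_section (E : abext) (s : g -> ecar E) : Prop :=
  lin s /\ forall x, ep E (s x) = x.

(* the induced representation of E is rho: [s x, u] = rho x u (h identified with i h) *)
Definition induces_rep (E : abext) : Prop :=
  forall s, is_section E s -> forall x u, ebr E (s x) (ei E u) = ei E (rho x u).

Definition ext_cocycle (E : abext) (s : g -> ecar E) (w : g -> g -> h) (c : g -> h)
  : Prop :=
  (forall x y, ei E (w x y) = ebr E (s x) (s y) - s (brg x y)) /\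
  (forall x, ei E (c x) = eD E (s x) - s (D x)).

Definition ext_iso (E1 E2 : abext) : Prop :=
  exists kappa : ecar E2 -> ecar E1,
    lin kappa /\ bijective kappa /\
    (forall a b, kappa (ebr E2 a b) = ebr E1 (kappa a) (kappa b)) /\
    (forall a, eD E1 (kappa a) = kappa (eD E2 a)) /\
    (forall u, kappa (ei E2 u) = ei E1 u) /\
    (forall a, ep E1 (kappa a) = ep E2 a).

End Defs.

Arguments is_lie {F L} br.
Arguments diff_lie {F L} br D.
Arguments is_rep {F g} brg D {h} rho K.
Arguments dCE1 {F g} brg {h} rho f x y.
Arguments T1 {F g} D {h} K f x.
Arguments dCE2 {F g} brg {h} rho w x y z.
Arguments del1 {F g} brg D {h} rho c x y.
Arguments T2 {F g} D {h} K w x y.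
Arguments cochain2 {F g h} w c.
Arguments cocycle2 {F g} brg D {h} rho K w c.
Arguments cohomologous {F g} brg D {h} rho K w1 c1 w2 c2.
Arguments is_abext {F g} brg D {h} K {G} br DG i p.
Arguments abext {F g} brg D {h} K.
Arguments is_section {F g brg D h K} E s.
Arguments induces_rep {F g brg D h} rho {K} E.
Arguments ext_cocycle {F g} brg D {h K} E s w c.
Arguments ext_iso {F g brg D h K} E1 E2.

(* Main.v *)
Require Import Defs.
From mathcomp Require Import all_boot all_order all_algebra.
From mathcomp Require classical_sets.
From Stdlib Require Import IndefiniteDescription Classical.
Import GRing.Theory.
Local Open Scope ring_scope.

Inductive zexp := ZAt of nat | ZZero | ZAdd of zexp & zexp | ZOpp of zexp.

Section ZRefl.
Variable V : zmodType.
Fixpoint zeval (env : seq V) (e : zexp) : V :=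
  match e with
  | ZAt n => nth 0 env n
  | ZZero => 0
  | ZAdd a b => zeval env a + zeval env b
  | ZOpp a => - zeval env a
  end.
Fixpoint nfe (env : seq V) (cs : seq int) : V :=
  match cs with
  | [::] => 0
  | c :: cs' => (head 0 env) *~ c + nfe (behead env) cs'
  end.
Fixpoint addl (l m : seq int) : seq int :=
  match l, m with
  | [::], _ => m
  | _, [::] => l
  | a :: l', b :: m' => (a + b) :: addl l' m'
  end.
Fixpoint coef (e : zexp) : seq int :=
  match e with
  | ZAt n => rcons (nseq n 0) 1
  | ZZero => [::]
  | ZAdd a b => addl (coef a) (coef b)
  | ZOpp a => map (fun c => - c) (coef a)
  end.
Lemma nfe_addl env l m : nfe env (addl l m) = nfe env l + nfe env m.
Proof.
elim: l m env => [|a l IH] [|b m] env /=; rewrite ?add0r ?addr0 //.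
by rewrite IH mulrzDr addrACA.
Qed.
Lemma nfe_opp env l : nfe env (map (fun c => - c) l) = - nfe env l.
Proof. by elim: l env => [|a l IH] env /=; rewrite ?oppr0 // IH opprD mulrNz. Qed.
Lemma nfe_at env n : nfe env (rcons (nseq n 0) 1) = nth 0 env n.
Proof.
elim: n env => [|n IH] [|v env] /=; rewrite ?addr0 ?mul0rz ?add0r //.
  by rewrite IH nth_nil.
Qed.
Lemma coefE env e : zeval env e = nfe env (coef e).
Proof.
elim: e => [n||a IHa b IHb|a IHa] /=.
- by rewrite nfe_at.
- by [].
- by rewrite nfe_addl IHa IHb.
- by rewrite nfe_opp IHa.
Qed.
Lemma nfe0 env l : all (fun c => c == 0) l -> nfe env l = 0.
Proof. by elim: l env => [|a l IH] env //= /andP[/eqP -> /IH ->]; rewrite mulr0z addr0. Qed.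
Lemma zsound env e1 e2 :
  all (fun c => c == 0) (coef (ZAdd e1 (ZOpp e2))) -> zeval env e1 = zeval env e2.
Proof.
move=> H; apply/eqP; rewrite -subr_eq0; apply/eqP.
by rewrite -[zeval env e1 - _]/(zeval env (ZAdd e1 (ZOpp e2))) coefE nfe0.
Qed.
End ZRefl.

Ltac zin x l :=
  match l with
  | @nil _ => constr:(false)
  | cons ?y _ => let _ := constr:(@Logic.eq_refl _ x : x = y) in constr:(true)
  | cons _ ?r => zin x r
  end.
Ltac zcollect t l :=
  lazymatch t with
  | @GRing.add _ ?a ?b => let l1 := zcollect a l in zcollect b l1
  | @GRing.opp _ ?a => zcollect a l
  | @GRing.zero _ => l
  | _ => let b := zin t l in
         lazymatch b with true => l | false => constr:(cons t l) end
  end.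
Ltac zidx x l :=
  match l with
  | cons ?y _ => let _ := constr:(@Logic.eq_refl _ x : x = y) in constr:(0%N)
  | cons _ ?r => let n := zidx x r in constr:(n.+1)
  end.
Ltac zreify t l :=
  lazymatch t with
  | @GRing.add _ ?a ?b => let ea := zreify a l in let eb := zreify b l in constr:(ZAdd ea eb)
  | @GRing.opp _ ?a => let ea := zreify a l in constr:(ZOpp ea)
  | @GRing.zero _ => constr:(ZZero)
  | _ => let n := zidx t l in constr:(ZAt n)
  end.
Ltac zmod_eq :=
  lazymatch goal with |- @eq ?T ?l ?r =>
    let env0 := zcollect l (@nil T) in
    let env := zcollect r env0 in
    let el := zreify l env in
    let er := zreify r env in
    change (zeval _ env el = zeval _ env er);
    apply: zsound; vm_compute; reflexivity
  end.

Lemma zl1 (V : zmodType) (A B L R : V) : A = B -> L - R = A - B -> L = R.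
Proof. by move=> -> /eqP; rewrite subrr subr_eq0 => /eqP. Qed.
Lemma zl2 (V : zmodType) (A B L R : V) : A = B -> L - R = B - A -> L = R.
Proof. by move=> -> /eqP; rewrite subrr subr_eq0 => /eqP. Qed.
Arguments zl1 {V A B L R}.
Arguments zl2 {V A B L R}.
Ltac zmod_use H := first [ apply: (zl1 H); zmod_eq | apply: (zl2 H); zmod_eq ].

Lemma fchoice A B (P : A -> B -> Prop) :
  (forall a, exists b, P a b) -> exists f, forall a, P a (f a).
Proof.
move=> H; exists (fun a => proj1_sig (constructive_indefinite_description _ (H a))).
by move=> a; exact: proj2_sig.
Qed.

Section LinFacts.
Variables (F : fieldType) (U V : lmodType F) (f : U -> V) (Hf : lin f).
Lemma lin0 : f 0 = 0.
Proof.
have H := Hf 1 0 0; rewrite !scale1r addr0 in H.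
by apply: (addrI (f 0)); rewrite addr0 -H.
Qed.
Lemma linD x y : f (x + y) = f x + f y.
Proof. by have := Hf 1 x y; rewrite !scale1r. Qed.
Lemma linZ a x : f (a *: x) = a *: f x.
Proof. by have := Hf a x 0; rewrite !addr0 lin0 addr0. Qed.
Lemma linN x : f (- x) = - f x.
Proof. by rewrite -scaleN1r linZ scaleN1r. Qed.
End LinFacts.
Arguments lin0 {F U V f}.
Arguments linD {F U V f}.
Arguments linZ {F U V f}.
Arguments linN {F U V f}.

Lemma lin_comp (F : fieldType) (U V W : lmodType F) (f : V -> W) (g : U -> V) :
  lin f -> lin g -> lin (fun x => f (g x)).
Proof. by move=> Hf Hg a x y; rewrite Hg Hf. Qed.
Lemma lin_opp (F : fieldType) (U V : lmodType F) (f : U -> V) :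
  lin f -> lin (fun x => - f x).
Proof. by move=> Hf a x y; rewrite Hf opprD scalerN. Qed.
Lemma lin_sub (F : fieldType) (U V : lmodType F) (f g : U -> V) :
  lin f -> lin g -> lin (fun x => f x - g x).
Proof. move=> Hf Hg a x y; rewrite Hf Hg scalerBr. zmod_eq. Qed.

Arguments lin_comp {F U V W f g}.
Arguments lin_opp {F U V f}.
Arguments lin_sub {F U V f g}.

Section LieFacts.
Variables (F : fieldType) (L : lmodType F) (br : L -> L -> L) (H : is_lie br).
Lemma lieDr x y z : br x (y + z) = br x y + br x z.
Proof. exact: (linD (proj1 H x) y z). Qed.
Lemma lieDl x y z : br (x + y) z = br x z + br y z.
Proof. exact: (linD ((proj1 (proj2 H)) z) x y). Qed.
Lemma lieZr a x y : br x (a *: y) = a *: br x y.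
Proof. exact: (linZ ((proj1 H) x) a y). Qed.
Lemma lieZl a x y : br (a *: x) y = a *: br x y.
Proof. exact: (linZ ((proj1 (proj2 H)) y) a x). Qed.
Lemma lieNr x y : br x (- y) = - br x y.
Proof. exact: (linN ((proj1 H) x) y). Qed.
Lemma lieNl x y : br (- x) y = - br x y.
Proof. exact: (linN ((proj1 (proj2 H)) y) x). Qed.
Lemma lie0r x : br x 0 = 0.
Proof. exact: (lin0 ((proj1 H) x)). Qed.
Lemma lie0l y : br 0 y = 0.
Proof. exact: (lin0 ((proj1 (proj2 H)) y)). Qed.
Lemma lieA x y : br y x = - br x y.
Proof.
have := (proj1 (proj2 (proj2 H))) (x + y); rewrite lieDl !lieDr (proj1 (proj2 (proj2 H))) (proj1 (proj2 (proj2 H))) add0r addr0.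
by move/eqP; rewrite addrC addr_eq0 => /eqP.
Qed.
Lemma lieJ x y z : br x (br y z) + br y (br z x) + br z (br x y) = 0.
Proof. exact: (proj2 (proj2 (proj2 H))). Qed.
End LieFacts.
Arguments lieDr {F L br}.
Arguments lieDl {F L br}.
Arguments lieZr {F L br}.
Arguments lieZl {F L br}.
Arguments lieNr {F L br}.
Arguments lieNl {F L br}.
Arguments lie0r {F L br}.
Arguments lie0l {F L br}.
Arguments lieA {F L br}.
Arguments lieJ {F L br}.

Lemma zl3 (V : zmodType) (A1 B1 A2 B2 L R : V) (s1 s2 : bool) :
  A1 = B1 -> A2 = B2 ->
  L - R = (if s1 then A1 - B1 else B1 - A1) + (if s2 then A2 - B2 else B2 - A2) -> L = R.
Proof. by move=> -> -> /eqP; rewrite !if_same !subrr addr0 subr_eq0 => /eqP. Qed.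
Ltac zmod_use2 H1 H2 :=
  first [ apply: (@zl3 _ _ _ _ _ _ _ true true H1 H2); zmod_eq
        | apply: (@zl3 _ _ _ _ _ _ _ true false H1 H2); zmod_eq
        | apply: (@zl3 _ _ _ _ _ _ _ false true H1 H2); zmod_eq
        | apply: (@zl3 _ _ _ _ _ _ _ false false H1 H2); zmod_eq ].

Local Arguments ecar {F g brg D h K}.
Local Arguments ebr {F g brg D h K}.
Local Arguments eD {F g brg D h K}.
Local Arguments ei {F g brg D h K}.
Local Arguments ep {F g brg D h K}.
Local Arguments eax {F g brg D h K}.
Local Arguments AbExt {F g brg D h K}.

Section PairFacts.
Variables (F : fieldType) (U V : lmodType F).
Lemma pD (a c : U) (b d : V) : (a, b) + (c, d) = (a + c, b + d) :> (U * V)%type.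
Proof. by []. Qed.
Lemma pN (a : U) (b : V) : - (a, b) = (- a, - b) :> (U * V)%type.
Proof. by []. Qed.
Lemma pZ k (a : U) (b : V) : k *: (a, b) = (k *: a, k *: b) :> (U * V)%type.
Proof. by []. Qed.
Lemma p0 : 0 = (0, 0) :> (U * V)%type.
Proof. by []. Qed.
End PairFacts.

Lemma bil_anti (F : fieldType) (L V : lmodType F) (w : L -> L -> V) :
  (forall x, lin (w x)) -> (forall y, lin (fun x => w x y)) -> (forall x, w x x = 0) ->
  forall x y, w y x = - w x y.
Proof.
move=> Hl Hr Ha x y.
have := Ha (x + y); rewrite (linD (Hr _)) !(linD (Hl _)) !Ha add0r addr0.
by move/eqP; rewrite addrC addr_eq0 => /eqP.
Qed.

Arguments bil_anti {F L V w}.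

Module SecEx.
Import classical_sets.
Local Open Scope classical_set_scope.
Local Open Scope ring_scope.
Lemma section_exists (F : fieldType) (G g : lmodType F) (p : G -> g) :
  lin p -> (forall x, exists a, p a = x) ->
  exists s : g -> G, lin s /\ forall x, p (s x) = x.
Proof.
move=> Hp Hsurj.
pose P (A : set (g * G)%type) :=
  (forall y1 b1 y2 b2 k, A (y1, b1) -> A (y2, b2) -> A (k *: y1 + y2, k *: b1 + b2)) /\
  (forall y b, A (y, b) -> p b = y) /\ (forall b, A (0, b) -> b = 0).
have [A [[Acl [Ap A0z]] Amax]] : exists A, P A /\ forall B, A `<` B -> ~ P B.
  apply: Zorn_bigcup => FF FP Ftot; split; [|split].
  - move=> y1 b1 y2 b2 k [X FX Xz1] [Y FY Yz2].
    have [XY|YX] := Ftot X Y FX FY.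
    + exists Y => //; apply: (proj1 (FP Y FY)) => //; exact: XY.
    + exists X => //; apply: (proj1 (FP X FX)) => //; exact: YX.
  - by move=> y b [X FX Xz]; exact: (proj1 (proj2 (FP X FX))).
  - by move=> b [X FX Xz]; exact: (proj2 (proj2 (FP X FX))).
pose A0 := fun z : (g * G)%type => A z \/ z = (0, 0).
have A00 : forall y b, A (y, b) -> A (0, 0).
  by move=> y b Ayb; have := Acl _ _ _ _ (-1) Ayb Ayb; rewrite !scaleN1r !addNr.
have A0cl : forall y1 b1 y2 b2 k, A0 (y1, b1) -> A0 (y2, b2) -> A0 (k *: y1 + y2, k *: b1 + b2).
  move=> y1 b1 y2 b2 k [H1|[-> ->]] [H2|[-> ->]].
  - by left; exact: Acl.
  - by left; have := Acl _ _ _ _ k H1 (A00 _ _ H1); rewrite !addr0.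
  - by left; rewrite !scaler0 !add0r.
  - by right; rewrite !scaler0 !addr0.
have A0p : forall y b, A0 (y, b) -> p b = y.
  by move=> y b [H|[-> ->]]; [exact: Ap | exact: lin0 Hp].
have A0z' : forall b, A0 (0, b) -> b = 0.
  by move=> b [/A0z //|[->]].
have Htot : forall x, exists b, A0 (x, b).
  move=> x0; apply: NNPP => Hn.
  have [a0 Ha0] := Hsurj x0.
  pose B := fun z : (g * G)%type =>
    exists t y b, A0 (y, b) /\ z.1 = y + t *: x0 /\ z.2 = b + t *: a0.
  apply: (Amax B).
  - split.
    + move=> [y b] Ayb; exists 0, y, b; split; first by left.
      by rewrite !scale0r !addr0.
    + move=> BA.
      have : B (x0, a0).
        by exists 1, 0, 0; split; [by right|]; rewrite !scale1r !add0r.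
      move/BA => Ax0; apply: Hn; exists a0; by left.
  - split; [|split].
    + move=> y1 b1 y2 b2 k [t1 [z1 [c1 [H1 [/= e1 f1]]]]] [t2 [z2 [c2 [H2 [/= e2 f2]]]]].
      exists (k * t1 + t2), (k *: z1 + z2), (k *: c1 + c2); split; first exact: A0cl.
      rewrite /= e1 e2 f1 f2 !scalerDr !scalerDl !scalerA.
      by split; rewrite -!addrA; congr (_ + _); rewrite [RHS]addrC -!addrA; congr (_ + _); rewrite addrC.
    + move=> y b [t [z [c' [H [/= e f]]]]].
      by rewrite f e (linD Hp) (linZ Hp) Ha0 (A0p _ _ H).
    + move=> b [t [z [c' [H [/= e f]]]]].
      case: (eqVneq t 0) => [t0|tn0].
      * move: e f; rewrite t0 !scale0r !addr0 => e f.
        by rewrite f; apply: A0z'; rewrite e.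
      * exfalso; apply: Hn; exists ((- t^-1) *: c' + 0).
        have -> : x0 = (- t^-1) *: z + 0.
          have htx : t *: x0 = - z.
            by apply/eqP; rewrite -addr_eq0 addrC -e.
          by rewrite addr0 -[x0]scale1r -(mulVf tn0) -scalerA htx scalerN scaleNr.
        by apply: A0cl => //; right.
have [s Hs] := @fchoice _ _ _ Htot.
exists s; split; last by move=> x; exact: A0p (Hs x).
move=> k x y.
have H1 := Hs (k *: x + y). have H2 := A0cl _ _ _ _ k (Hs x) (Hs y).
have := A0cl _ _ _ _ (-1) H1 H2; rewrite scaleN1r addNr => /A0z'.
by move/eqP; rewrite scaleN1r addrC subr_eq0 => /eqP.
Qed.
End SecEx.


Section Main.
Variables (F : fieldType) (g : lmodType F) (brg : g -> g -> g) (D : g -> g)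
  (h : lmodType F) (rho : g -> h -> h) (K : h -> h).
Hypothesis Hg : diff_lie brg D.
Hypothesis Hrep : is_rep brg D rho K.

Let Hgl : is_lie brg := proj1 Hg.
Let HDlin : lin D := proj1 (proj2 Hg).
Let HDc := proj2 (proj2 Hg).
Let Hrl : forall x, lin (rho x) := proj1 Hrep.
Let Hrlin := proj1 (proj2 Hrep).
Let Hrbr := proj1 (proj2 (proj2 Hrep)).
Let HKl : lin K := proj1 (proj2 (proj2 (proj2 Hrep))).
Let HKr := proj2 (proj2 (proj2 (proj2 Hrep))).
Let Hrl2 u : lin (fun x => rho x u) := fun a x y => Hrlin a x y u.

Lemma rhoDr x u v : rho x (u + v) = rho x u + rho x v. Proof. exact: (linD (Hrl x)). Qed.
Lemma rhoNr x u : rho x (- u) = - rho x u. Proof. exact: (linN (Hrl x)). Qed.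
Lemma rhoZr x a u : rho x (a *: u) = a *: rho x u. Proof. exact: (linZ (Hrl x)). Qed.
Lemma rho0r x : rho x 0 = 0. Proof. exact: (lin0 (Hrl x)). Qed.
Lemma rhoDl x y u : rho (x + y) u = rho x u + rho y u. Proof. exact: (linD (Hrl2 u)). Qed.
Lemma rhoNl x u : rho (- x) u = - rho x u. Proof. exact: (linN (Hrl2 u)). Qed.
Lemma rhoZl a x u : rho (a *: x) u = a *: rho x u. Proof. exact: (linZ (Hrl2 u)). Qed.
Lemma rho0l u : rho 0 u = 0. Proof. exact: (lin0 (Hrl2 u)). Qed.
Lemma KD u v : K (u + v) = K u + K v. Proof. exact: (linD HKl). Qed.
Lemma KN u : K (- u) = - K u. Proof. exact: (linN HKl). Qed.
Lemma KZ a u : K (a *: u) = a *: K u. Proof. exact: (linZ HKl). Qed.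
Lemma K0 : K 0 = 0. Proof. exact: (lin0 HKl). Qed.
Lemma DD x y : D (x + y) = D x + D y. Proof. exact: (linD HDlin). Qed.
Lemma DN x : D (- x) = - D x. Proof. exact: (linN HDlin). Qed.
Lemma DZ a x : D (a *: x) = a *: D x. Proof. exact: (linZ HDlin). Qed.
Lemma D0 : D 0 = 0. Proof. exact: (lin0 HDlin). Qed.

Section Ext.
Variable E : abext brg D K.
Let Ax := eax E.
Lemma E_lie : is_lie (ebr E). Proof. by move: Ax => [[H _] _]. Qed.
Lemma E_Dlin : lin (eD E). Proof. by move: Ax => [[_ [H _]] _]. Qed.
Lemma E_Dc a b : eD E (ebr E a b) =
  ebr E a (eD E b) - ebr E b (eD E a) + ebr E (eD E a) (eD E b).
Proof. by move: Ax => [[_ [_ H]] _]; apply: H. Qed.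
Lemma E_ilin : lin (ei E). Proof. by move: Ax => [_ [H _]]. Qed.
Lemma E_plin : lin (ep E). Proof. by move: Ax => [_ [_ [H _]]]. Qed.
Lemma E_iinj u v : ei E u = ei E v -> u = v.
Proof. by move: Ax => [_ [_ [_ [H _]]]]; apply: H. Qed.
Lemma E_psurj x : exists a, ep E a = x.
Proof. by move: Ax => [_ [_ [_ [_ [H _]]]]]; apply: H. Qed.
Lemma E_ker a : ep E a = 0 <-> exists u, a = ei E u.
Proof. by move: Ax => [_ [_ [_ [_ [_ [H _]]]]]]; apply: H. Qed.
Lemma E_ii u v : ebr E (ei E u) (ei E v) = 0.
Proof. by move: Ax => [_ [_ [_ [_ [_ [_ [H _]]]]]]]; apply: H. Qed.
Lemma E_pbr a b : ep E (ebr E a b) = brg (ep E a) (ep E b).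
Proof. by move: Ax => [_ [_ [_ [_ [_ [_ [_ [H _]]]]]]]]; apply: H. Qed.
Lemma E_Di u : eD E (ei E u) = ei E (K u).
Proof. by move: Ax => [_ [_ [_ [_ [_ [_ [_ [_ [H _]]]]]]]]]; apply: H. Qed.
Lemma E_pD a : ep E (eD E a) = D (ep E a).
Proof. by move: Ax => [_ [_ [_ [_ [_ [_ [_ [_ [_ H]]]]]]]]]; apply: H. Qed.
Lemma E_pi u : ep E (ei E u) = 0.
Proof. by apply/E_ker; exists u. Qed.
Lemma eiD u v : ei E (u + v) = ei E u + ei E v. Proof. exact: (linD E_ilin). Qed.
Lemma eiN u : ei E (- u) = - ei E u. Proof. exact: (linN E_ilin). Qed.
Lemma eiZ a u : ei E (a *: u) = a *: ei E u. Proof. exact: (linZ E_ilin). Qed.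
Lemma ei0 : ei E 0 = 0. Proof. exact: (lin0 E_ilin). Qed.
Lemma epD u v : ep E (u + v) = ep E u + ep E v. Proof. exact: (linD E_plin). Qed.
Lemma epN u : ep E (- u) = - ep E u. Proof. exact: (linN E_plin). Qed.
Lemma epZ a u : ep E (a *: u) = a *: ep E u. Proof. exact: (linZ E_plin). Qed.
Lemma eDD u v : eD E (u + v) = eD E u + eD E v. Proof. exact: (linD E_Dlin). Qed.
Lemma eDN u : eD E (- u) = - eD E u. Proof. exact: (linN E_Dlin). Qed.
Lemma eDZ a u : eD E (a *: u) = a *: eD E u. Proof. exact: (linZ E_Dlin). Qed.
Lemma eD0 : eD E 0 = 0. Proof. exact: (lin0 E_Dlin). Qed.

Lemma decomp s : is_section E s ->
  exists pi : ecar E -> h, lin pi /\ (forall a, a = s (ep E a) + ei E (pi a)).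
Proof.
move=> [Hsl Hsp].
have : forall a, exists u, a - s (ep E a) = ei E u.
  move=> a; apply/E_ker.
  by rewrite epD epN Hsp subrr.
case/fchoice => pi Hpi; exists pi; split; last by move=> a; rewrite -Hpi; zmod_eq.
move=> k a b; apply: E_iinj; rewrite E_ilin -!Hpi E_plin Hsl scalerBr; zmod_eq.
Qed.

Arguments decomp {s}.
Lemma pi_sec s pi : is_section E s -> (forall a, a = s (ep E a) + ei E (pi a)) ->
  forall x u, pi (s x + ei E u) = u.
Proof.
move=> [Hsl Hsp] Hpi x u; apply: E_iinj; apply: (@addrI _ (s x)).
by rewrite [in RHS](Hpi (s x + ei E u)) epD Hsp E_pi addr0.
Qed.


Arguments pi_sec {s pi}.
Lemma pi_s s pi : is_section E s -> (forall a, a = s (ep E a) + ei E (pi a)) ->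
  forall x, pi (s x) = 0.
Proof. by move=> Hs Hpi x; have := pi_sec Hs Hpi x 0; rewrite ei0 addr0. Qed.
Arguments pi_s {s pi}.
Lemma pi_i s pi : is_section E s -> (forall a, a = s (ep E a) + ei E (pi a)) ->
  forall u, pi (ei E u) = u.
Proof.
move=> Hs Hpi u; have := pi_sec Hs Hpi 0 u.
by rewrite (lin0 (proj1 Hs)) add0r.
Qed.

Arguments pi_i {s pi}.
Section WithSec.
Variable s : g -> ecar E.
Hypothesis Hs : is_section E s.
Hypothesis Hind : induces_rep rho E.
Lemma br_si x u : ebr E (s x) (ei E u) = ei E (rho x u).
Proof. exact: Hind s Hs x u. Qed.
Lemma br_is u y : ebr E (ei E u) (s y) = - ei E (rho y u).
Proof. by rewrite (lieA E_lie (s y)) br_si. Qed.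
End WithSec.
Arguments br_si {s}.
Arguments br_is {s}.
Section WithCoc.
Variables (s : g -> ecar E) (w : g -> g -> h) (c : g -> h).
Hypothesis Hwc : ext_cocycle brg D E s w c.
Lemma br_ss x y : ebr E (s x) (s y) = s (brg x y) + ei E (w x y).
Proof. by rewrite (proj1 Hwc); zmod_eq. Qed.
Lemma eD_s x : eD E (s x) = s (D x) + ei E (c x).
Proof. by rewrite (proj2 Hwc); zmod_eq. Qed.
Hypothesis Hs : is_section E s.
Hypothesis Hind : induces_rep rho E.
Lemma br_formula x y u v : ebr E (s x + ei E u) (s y + ei E v) =
  s (brg x y) + ei E (w x y + rho x v - rho y u).
Proof.
rewrite (lieDl E_lie) !(lieDr E_lie) br_ss (br_si Hs Hind) (br_is Hs Hind) E_ii !eiD eiN.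
zmod_eq.
Qed.
Lemma eD_formula x u : eD E (s x + ei E u) = s (D x) + ei E (c x + K u).
Proof. rewrite eDD eD_s E_Di eiD; zmod_eq. Qed.
End WithCoc.
Arguments br_ss {s w c}.
Arguments eD_s {s w c}.
Arguments br_formula {s w c}.
Arguments eD_formula {s w c}.

Lemma part2 : induces_rep rho E -> forall s, is_section E s ->
  exists w c, ext_cocycle brg D E s w c /\ cocycle2 brg D rho K w c.
Proof.
move=> Hind s Hs; have [pi [Hpil Hpi]] := decomp Hs.
have [Hsl Hsp] := Hs.
pose w x y := pi (ebr E (s x) (s y)). pose c x := pi (eD E (s x)).
have Hext : ext_cocycle brg D E s w c.
  split=> [x y|x].
    by rewrite [in RHS](Hpi (ebr E (s x) (s y))) E_pbr !Hsp; zmod_eq.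
  by rewrite [in RHS](Hpi (eD E (s x))) E_pD Hsp; zmod_eq.
exists w, c; split => //.
have HL := E_lie.
have wl x : lin (w x) := lin_comp Hpil (lin_comp (proj1 HL (s x)) Hsl).
have wr y : lin (fun x => w x y) := lin_comp Hpil (lin_comp (proj1 (proj2 HL) (s y)) Hsl).
have wA a b : w b a = - w a b by rewrite /w (lieA HL (s a)) (linN Hpil).
have wNl a b : w (- a) b = - w a b := linN (wr b) a.
split; [split; [exact: wl|split; [exact: wr|split]]|split].
- by move=> x; rewrite /w (proj1 (proj2 (proj2 HL))) (lin0 Hpil).
- exact: lin_comp Hpil (lin_comp E_Dlin Hsl).
- move=> x y z.
  have J := lieJ HL (s x) (s y) (s z).
  rewrite !(br_ss Hext) !(lieDr HL) !(br_ss Hext) !(br_si Hs Hind) in J.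
  have Sg : s (brg x (brg y z)) + s (brg y (brg z x)) + s (brg z (brg x y)) = 0.
    by rewrite -!(linD Hsl) (lieJ Hgl) (lin0 Hsl).
  rewrite (wA (brg y z) x) (wA (brg z x) y) (wA (brg x y) z) (wA x z) in J.
  rewrite (lieA Hgl x z) in J Sg.
  rewrite wNl !rhoNr !eiN in J.
  apply: E_iinj; rewrite ei0 /dCE2 !eiD !eiN.
  zmod_use2 J Sg.
- move=> x y.
  have J := E_Dc (s x) (s y).
  rewrite !(eD_s Hext) (br_ss Hext) eDD (eD_s Hext) E_Di in J.
  rewrite !(lieDl HL) !(lieDr HL) !(br_ss Hext) !(br_si Hs Hind) !(br_is Hs Hind) !E_ii in J.
  rewrite HDc !(linD Hsl) (linN Hsl) (wA (D x) y) !eiN in J.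
  apply: E_iinj; rewrite ei0 /del1 /T2 !eiD !eiN.
zmod_use J.
Qed.

End Ext.
Arguments decomp {E s}.
Arguments pi_sec {E s pi}.
Arguments pi_s {E s pi}.
Arguments pi_i {E s pi}.
Arguments br_si {E s}.
Arguments br_is {E s}.
Arguments br_ss {E s w c}.
Arguments eD_s {E s w c}.
Arguments br_formula {E s w c}.
Arguments eD_formula {E s w c}.

Lemma part3 (E1 E2 : abext brg D K) : induces_rep rho E1 -> induces_rep rho E2 ->
  forall s1 s2 w1 c1 w2 c2, is_section E1 s1 -> is_section E2 s2 ->
  ext_cocycle brg D E1 s1 w1 c1 -> ext_cocycle brg D E2 s2 w2 c2 ->
  (ext_iso E1 E2 <-> cohomologous brg D rho K w1 c1 w2 c2).
Proof.
move=> Hi1 Hi2 s1 s2 w1 c1 w2 c2 Hs1 Hs2 He1 He2.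
have [pi1 [Hpl1 Hp1]] := decomp Hs1.
have [pi2 [Hpl2 Hp2]] := decomp Hs2.
have Hps1 := pi_sec Hs1 Hp1. have Hps2 := pi_sec Hs2 Hp2.
have pis1 := pi_s Hs1 Hp1. have pii1 := pi_i Hs1 Hp1.
have [Hsl1 Hsp1] := Hs1. have [Hsl2 Hsp2] := Hs2.
split.
- case=> kap [Hkl [Hkb [Hkbr [HkD [Hki Hkp]]]]].
  pose f0 x := pi1 (kap (s2 x)).
  have Hks x : kap (s2 x) = s1 x + ei E1 (f0 x).
    by rewrite {1}(Hp1 (kap (s2 x))) Hkp Hsp2.
  exists (fun x => - f0 x); split.
    exact: lin_opp (lin_comp Hpl1 (lin_comp Hkl Hsl2)).
  split.
  + move=> x y.
    have J := Hkbr (s2 x) (s2 y).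
    rewrite (br_ss He2) (linD Hkl) Hki !Hks (br_formula He1 Hs1 Hi1) in J.
    move/(congr1 pi1): J; rewrite !(linD Hpl1) !pis1 !pii1 => J.
    rewrite /dCE1 /= !rhoNr; zmod_use J.
  + move=> x.
    have J := HkD (s2 x).
    rewrite Hks (eD_formula He1) (eD_s He2) (linD Hkl) Hki Hks in J.
    move/(congr1 pi1): J; rewrite !(linD Hpl1) !pis1 !pii1 => J.
    rewrite /T1 /= KN; zmod_use J.
- case=> f [Hfl [Hw Hc]].
  pose kap a := s1 (ep E2 a) + ei E1 (pi2 a - f (ep E2 a)).
  pose kai b := s2 (ep E1 b) + ei E2 (pi1 b + f (ep E1 b)).
  have kapE x u : kap (s2 x + ei E2 u) = s1 x + ei E1 (u - f x).
    by rewrite /kap epD Hsp2 E_pi addr0 Hps2.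
  have kaiE x u : kai (s1 x + ei E1 u) = s2 x + ei E2 (u + f x).
    by rewrite /kai epD Hsp1 E_pi addr0 Hps1.
  have dec2 a : exists x u, a = s2 x + ei E2 u.
    by exists (ep E2 a), (pi2 a); exact: Hp2.
  have dec1 b : exists x u, b = s1 x + ei E1 u.
    by exists (ep E1 b), (pi1 b); exact: Hp1.
  exists kap; split; [|split; [|split; [|split; [|split]]]].
  + move=> k a b; have [x [u ->]] := dec2 a; have [y [v ->]] := dec2 b.
    have -> : k *: (s2 x + ei E2 u) + (s2 y + ei E2 v) = s2 (k *: x + y) + ei E2 (k *: u + v).
      by rewrite Hsl2 E_ilin scalerDr; zmod_eq.
    rewrite !kapE Hsl1 Hfl !scalerDr !eiD !eiN !eiD !eiZ !scalerBr; zmod_eq.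
  + exists kai.
      by move=> a; have [x [u ->]] := dec2 a; rewrite kapE kaiE subrK.
    by move=> b; have [x [u ->]] := dec1 b; rewrite kaiE kapE addrK.
  + move=> a b; have [x [u ->]] := dec2 a; have [y [v ->]] := dec2 b.
    rewrite (br_formula He2 Hs2 Hi2) !kapE (br_formula He1 Hs1 Hi1).
    congr (_ + ei E1 _).
    have J := Hw x y; rewrite /dCE1 in J.
    rewrite !rhoDr !rhoNr; zmod_use J.
  + move=> a; have [x [u ->]] := dec2 a.
    rewrite kapE (eD_formula He1) (eD_formula He2) kapE.
    congr (_ + ei E1 _).
    have J := Hc x; rewrite /T1 in J.
    rewrite KD KN; zmod_use J.
  + move=> u.
    by rewrite -[ei E2 u]add0r -(lin0 Hsl2) kapE (lin0 Hsl1) add0r (lin0 Hfl) subr0.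
  + move=> a; have [x [u ->]] := dec2 a.
    by rewrite kapE !epD Hsp1 Hsp2 !E_pi.
Qed.

Lemma part4 w c : cocycle2 brg D rho K w c ->
  exists E : abext brg D K, induces_rep rho E /\
    exists s w' c', is_section E s /\ ext_cocycle brg D E s w' c' /\
      cohomologous brg D rho K w c w' c'.
Proof.
move=> [[Hwl [Hwr [Hwa Hcl]]] [Hd2 Hd1]].
have wA := bil_anti Hwl Hwr Hwa.
have wNl a b : w (- a) b = - w a b := linN (Hwr b) a.
have wNr a b : w a (- b) = - w a b := linN (Hwl a) b.
have wDl a b d : w (a + b) d = w a d + w b d := linD (Hwr d) a b.
have wDr a b d : w a (b + d) = w a b + w a d := linD (Hwl a) b d.
have w0l b : w 0 b = 0 := lin0 (Hwr b).
have w0r a : w a 0 = 0 := lin0 (Hwl a).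
pose br (a b : (g * h)%type) : (g * h)%type :=
  (brg a.1 b.1, rho a.1 b.2 - rho b.1 a.2 + w a.1 b.1).
pose DG (a : (g * h)%type) : (g * h)%type := (D a.1, c a.1 + K a.2).
pose i (u : h) : (g * h)%type := (0, u).
pose p (a : (g * h)%type) : g := a.1.
have Hlie : is_lie br.
  split; [|split; [|split]].
  - move=> [x u] k [y v] [y' v']; rewrite /br /= pZ pD.
    congr (_, _); first by rewrite (proj1 Hgl).
    rewrite Hrl Hrlin Hwl !scalerDr !scalerN; zmod_eq.
  - move=> [y v] k [x u] [x' u']; rewrite /br /= pZ pD.
    congr (_, _); first by rewrite (proj1 (proj2 Hgl)).
    rewrite Hrl Hrlin Hwr !scalerDr !scalerN; zmod_eq.
  - move=> [x u]; rewrite /br /= (proj1 (proj2 (proj2 Hgl))) subrr Hwa addr0.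
    by [].
  - move=> [x u] [y v] [z t]; rewrite /br /= !pD.
    congr (_, _); first exact: (lieJ Hgl).
    rewrite !rhoDr !rhoNr !Hrbr.
    have J := Hd2 x y z; rewrite /dCE2 in J.
    rewrite (wA (brg y z) x) (wA (brg z x) y) (wA (brg x y) z) (wA x z) (lieA Hgl x z).
    rewrite wNl !rhoNr.
    simpl; zmod_use J.
have Hab : is_abext brg D K br DG i p.
  split; [split; [exact: Hlie|split]|split; [|split; [|split; [|split; [|split; [|split; [|split; [|split]]]]]]]].
  - move=> k [x u] [y v]; rewrite /DG /= pZ pD.
    congr (_, _); first by rewrite HDlin.
    rewrite Hcl HKl !scalerDr; zmod_eq.
  - move=> [x u] [y v]; rewrite /br /DG /= pN !pD.
    congr (_, _); first by rewrite HDc.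
    simpl; rewrite !KD !KN !HKr !rhoDr.
    have J := Hd1 x y; rewrite /del1 /T2 in J.
    rewrite (wA (D x) y).
    zmod_use J.
  - move=> k u v; rewrite /i pZ pD scaler0 addr0; by [].
  - by move=> k a b.
  - by move=> u v [].
  - by move=> x; exists (x, 0).
  - move=> [x u]; rewrite /p /i /=; split; first by move=> ->; exists u.
    by case=> v [].
  - by move=> u v; rewrite /br /i /= (lie0l Hgl) !rho0l w0l subrr addr0.
  - by [].
  - by move=> u; rewrite /DG /i /= D0 (lin0 Hcl) add0r.
  - by [].
pose E := AbExt (g * h)%type br DG i p Hab.
exists E; split.
  move=> s [Hsl Hsp] x u.
  move: (Hsp x); rewrite /E /=.
  case: (s x) => a b /= ->.
  by rewrite /br /i /= (lie0r Hgl) rho0l w0r subr0 addr0.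
exists (fun x => (x, 0) : (g * h)%type), w, c; split; [|split; [split|]].
- split; last by [].
  by move=> k x y; rewrite pZ pD scaler0 addr0.
  by move=> x y; rewrite /E /= /br /i /= pN pD !rho0r subrr subrr add0r oppr0 addr0.
  by move=> x; rewrite /E /= /DG /i /= pN pD K0 subrr !addr0 subr0.
- exists (fun _ => 0); split; first by move=> k x y; rewrite scaler0 addr0.
  split; first by move=> x y; rewrite /dCE1 !rho0r subrr !subr0.
  by move=> x; rewrite /T1 K0 !subrr.
Qed.

End Main.

Theorem theorem4p17 (F : fieldType) (g : lmodType F) (brg : g -> g -> g)
    (D : g -> g) (h : lmodType F) (rho : g -> h -> h) (K : h -> h)
    (Hg : diff_lie brg D) (Hrep : is_rep brg D rho K) :
  (* every abelian extension admits a (linear) section *)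
  (forall E : abext brg D K, exists s, is_section E s) /\
  (* the data associated with a section is a well-defined 2-cocycle *)
  (forall (E : abext brg D K), induces_rep rho E ->
     forall s, is_section E s ->
     exists w c, ext_cocycle brg D E s w c /\ cocycle2 brg D rho K w c) /\
  (* the map [E] |-> [(w, c)] is well defined on isomorphism classes
     (independent of section and of representative) and injective *)
  (forall (E1 E2 : abext brg D K), induces_rep rho E1 -> induces_rep rho E2 ->
     forall s1 s2 w1 c1 w2 c2,
       is_section E1 s1 -> is_section E2 s2 ->
       ext_cocycle brg D E1 s1 w1 c1 -> ext_cocycle brg D E2 s2 w2 c2 ->
       (ext_iso E1 E2 <-> cohomologous brg D rho K w1 c1 w2 c2)) /\
  (* and surjective onto H^2 *)
  (forall w c, cocycle2 brg D rho K w c ->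
     exists E : abext brg D K, induces_rep rho E /\
       exists s w' c', is_section E s /\ ext_cocycle brg D E s w' c' /\
         cohomologous brg D rho K w c w' c').
Proof.
split; [|split; [|split]].
- move=> E; have [_ [_ [Hpl [_ [Hps _]]]]] := eax E.
  have [s [Hsl Hsp]] := SecEx.section_exists _ _ _ _ Hpl Hps.
  by exists s; split.
- move=> E Hind s Hs; by apply: part2.
- move=> E1 E2 Hi1 Hi2 s1 s2 w1 c1 w2 c2 Hs1 Hs2 He1 He2.
  exact: (@part3 F g brg D h rho K Hrep E1 E2 Hi1 Hi2 s1 s2 w1 c1 w2 c2 Hs1 Hs2 He1 He2).
- move=> w c Hc; by apply: part4.
Qed.
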